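(* Let $f$ be a $T$-norm. If $f$ is an Archimedean copula, then $f$ satisfies both property $A$ and property $B$.
   Context: A $T$-norm is a function $f:[0,1]^2\to[0,1]$ that is commutative, associative, monotonic ($x\leq y$ implies $f(x,z)\leq f(y,z)$) and satisfies $f(x,1)=x$. A $T$-norm $f$ is Archimedean if for all $0<x,y<1$ there is $n$ with $x^{\otimes n}\leq y$, where $x^{\otimes n}=f(x,f(x,\dots))$ is the $n$-fold product. A copula is a function $f:[0,1]^2\to[0,1]$ that satisfies neutrality of $1$, is monotonic, and satisfies property $B$. Property $A$: for all $0\leq x\leq y\leq z\leq w\leq 1$, $w+x\leq y+z$ implies $f(x,w)\leq f(y,z)$. Property $B$: for all $0\leq x\leq y\leq1$ and $0\leq z\leq w\leq1$, $f(x,w)-f(x,z)\leq f(y,w)-f(y,z)$. *)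

(* Defs.v *)
From Stdlib Require Import Reals.
Open Scope R_scope.

Definition unit_iv (x : R) : Prop := 0 <= x <= 1.

Definition maps_unit_square (f : R -> R -> R) : Prop :=
  forall x y, unit_iv x -> unit_iv y -> unit_iv (f x y).

Definition commutative_on (f : R -> R -> R) : Prop :=
  forall x y, unit_iv x -> unit_iv y -> f x y = f y x.

Definition associative_on (f : R -> R -> R) : Prop :=
  forall x y z, unit_iv x -> unit_iv y -> unit_iv z ->
    f x (f y z) = f (f x y) z.

Definition monotonic_on (f : R -> R -> R) : Prop :=
  forall x y z, unit_iv x -> unit_iv y -> unit_iv z ->
    x <= y -> f x z <= f y z.

Definition right_neutral_one (f : R -> R -> R) : Prop :=
  forall x, unit_iv x -> f x 1 = x.

(* neutrality of 1 (two-sided, as copulas need not be commutative) *)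
Definition neutral_one (f : R -> R -> R) : Prop :=
  forall x, unit_iv x -> f x 1 = x /\ f 1 x = x.

Definition is_Tnorm (f : R -> R -> R) : Prop :=
  maps_unit_square f /\ commutative_on f /\ associative_on f /\
  monotonic_on f /\ right_neutral_one f.

(* n-fold product: tpow f x n = x^{(x) (n+1)}, i.e. n+1 factors *)
Fixpoint tpow (f : R -> R -> R) (x : R) (n : nat) : R :=
  match n with
  | O => x
  | S m => f x (tpow f x m)
  end.

Definition archimedean (f : R -> R -> R) : Prop :=
  forall x y, 0 < x < 1 -> 0 < y < 1 -> exists n : nat, tpow f x n <= y.

Definition propB (f : R -> R -> R) : Prop :=
  forall x y z w, 0 <= x -> x <= y -> y <= 1 -> 0 <= z -> z <= w -> w <= 1 ->
    f x w - f x z <= f y w - f y z.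

Definition is_copula (f : R -> R -> R) : Prop :=
  maps_unit_square f /\ neutral_one f /\ monotonic_on f /\ propB f.

Definition propA (f : R -> R -> R) : Prop :=
  forall x y z w, 0 <= x -> x <= y -> y <= z -> z <= w -> w <= 1 ->
    w + x <= y + z -> f x w <= f y z.

(* Main.v *)
Require Import Defs.
From Stdlib Require Import Reals Lra.
Open Scope R_scope.

Definition cl (c : R) : R := Rmax 0 (Rmin 1 c).

Lemma cl_unit c : unit_iv (cl c).
Proof. unfold cl, unit_iv, Rmax, Rmin; repeat destruct Rle_dec; lra. Qed.

Lemma cl_lip a b : Rabs (cl a - cl b) <= Rabs (a - b).
Proof.
  unfold cl, Rmax, Rmin, Rabs; repeat destruct Rle_dec; repeat destruct Rcase_abs; lra.
Qed.

Lemma cl_id c : unit_iv c -> cl c = c.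
Proof. unfold cl, unit_iv, Rmax, Rmin; intros; repeat destruct Rle_dec; lra. Qed.

Theorem corollary3 (f : R -> R -> R) :
  is_Tnorm f -> is_copula f -> archimedean f -> propA f /\ propB f.
Proof.
  intros [Hmap [Hcom [Hass [Hmon Hrn]]]] [_ [Hneu [_ HB]]] _.
  split; [|exact HB].
  assert (Lip : forall a b y, unit_iv a -> unit_iv b -> unit_iv y ->
            Rabs (f a y - f b y) <= Rabs (a - b)).
  { assert (L1 : forall a b y, unit_iv a -> unit_iv b -> unit_iv y -> a <= b ->
              0 <= f b y - f a y <= b - a).
    { intros a b y Ha Hb Hy Hab. split.
      - pose proof (Hmon a b y Ha Hb Hy Hab); lra.
      - rewrite (Hcom b y Hb Hy), (Hcom a y Ha Hy).
        pose proof (HB y 1 a b ltac:(unfold unit_iv in *; lra) ltac:(unfold unit_iv in *; lra)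
          ltac:(lra) ltac:(unfold unit_iv in *; lra) Hab ltac:(unfold unit_iv in *; lra)) as H.
        destruct (Hneu a Ha) as [_ E1]. destruct (Hneu b Hb) as [_ E2]. lra. }
    intros a b y Ha Hb Hy. destruct (Rle_dec a b) as [h|h].
    - pose proof (L1 a b y Ha Hb Hy h). unfold Rabs; repeat destruct Rcase_abs; lra.
    - assert (b <= a) by lra. pose proof (L1 b a y Hb Ha Hy H).
      unfold Rabs; repeat destruct Rcase_abs; lra. }
  assert (Ex : forall x y, 0 <= x -> x <= y -> y <= 1 ->
            exists c, unit_iv c /\ f c y = x).
  { intros x y Hx Hxy Hy1.
    assert (Uy : unit_iv y) by (unfold unit_iv; lra).
    assert (U0 : unit_iv 0) by (unfold unit_iv; lra).
    assert (U1 : unit_iv 1) by (unfold unit_iv; lra).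
    assert (F0 : f 0 y = 0).
    { rewrite (Hcom 0 y U0 Uy).
      pose proof (Hmon y 1 0 Uy U1 U0 Hy1). destruct (Hneu 0 U0) as [_ E].
      pose proof (Hmap y 0 Uy U0). unfold unit_iv in *; lra. }
    assert (F1 : f 1 y = y) by (destruct (Hneu y Uy); auto).
    destruct (Req_dec x 0) as [h0|h0].
    { exists 0; split; [exact U0|lra]. }
    destruct (Req_dec x y) as [h1|h1].
    { exists 1; split; [exact U1|lra]. }
    set (h := fun c => f (cl c) y - x).
    assert (Ch : continuity h).
    { intros a. unfold continuity_pt, continue_in, limit1_in, limit_in.
      intros eps Heps. exists eps. split; [exact Heps|].
      intros b [_ Hb]. simpl in *. unfold Rdist in *. unfold h.
      replace (f (cl b) y - x - (f (cl a) y - x)) with (f (cl b) y - f (cl a) y) by ring.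
      pose proof (Lip (cl b) (cl a) y (cl_unit b) (cl_unit a) Uy).
      pose proof (cl_lip b a). lra. }
    destruct (IVT h 0 1 Ch ltac:(lra)) as [c [Hc Hhc]].
    { unfold h. rewrite cl_id by exact U0. lra. }
    { unfold h. rewrite cl_id by exact U1. lra. }
    exists c. split; [unfold unit_iv; lra|].
    unfold h in Hhc. rewrite cl_id in Hhc by (unfold unit_iv; lra). lra. }
  intros x y z w Hx Hxy Hyz Hzw Hw1 Hsum.
  assert (Ux : unit_iv x) by (unfold unit_iv; lra).
  assert (Uy : unit_iv y) by (unfold unit_iv; lra).
  assert (Uz : unit_iv z) by (unfold unit_iv; lra).
  assert (Uw : unit_iv w) by (unfold unit_iv; lra).
  assert (U1 : unit_iv 1) by (unfold unit_iv; lra).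
  destruct (Ex x y Hx Hxy ltac:(lra)) as [c [Uc Hc]].
  pose proof (HB c 1 z w ltac:(unfold unit_iv in *; lra) ltac:(unfold unit_iv in *; lra)
     ltac:(lra) ltac:(lra) Hzw Hw1) as B1.
  pose proof (HB c 1 y z ltac:(unfold unit_iv in *; lra) ltac:(unfold unit_iv in *; lra)
     ltac:(lra) ltac:(lra) Hyz ltac:(lra)) as B2.
  destruct (Hneu w Uw) as [_ Ew]. destruct (Hneu z Uz) as [_ Ez].
  destruct (Hneu y Uy) as [_ Ey].
  assert (Hu : f c w <= z) by lra.
  pose proof (Hmap c w Uc Uw) as Uu.
  rewrite <- Hc, (Hcom c y Uc Uy), <- (Hass y c w Uy Uc Uw).
  rewrite (Hcom y (f c w) Uy Uu), (Hcom y z Uy Uz).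
  apply Hmon; auto.
Qed.
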